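(* Let $R$ be a Dedekind ring with quotient field $K$, let $a\in R$ be square-free such that $f(x)=x^n-a$ is irreducible over $R$, and let $\alpha$ be a root of $f(x)$. If every prime ideal of $R$ that contains $n\cdot 1_K$ also contains $a$, then $R[\alpha]$ is integrally closed (in $K(\alpha)$).
   Context: An element $a$ of a Dedekind ring $R$ is square-free if the principal ideal $aR$ is not divisible by the square of any prime ideal of $R$. *)

(* Defs.v *)
From HB Require Import structures.
From mathcomp Require Import all_boot all_order all_algebra all_field.
Set Implicit Arguments. Unset Strict Implicit. Unset Printing Implicit Defensive.
Import GRing.Theory.
Local Open Scope ring_scope.

Section Ideals.
Variable R : idomainType.

Definition is_ideal (I : R -> Prop) : Prop :=
  [/\ I 0, (forall x y, I x -> I y -> I (x + y)) &
      (forall r x, I x -> I (r * x))].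

Definition is_prime_ideal (P : R -> Prop) : Prop :=
  [/\ is_ideal P, ~ P 1 & (forall x y, P (x * y) -> P x \/ P y)].

Definition principal_ideal (a : R) : R -> Prop := fun z => exists r, z = a * r.

Definition ideal_mul (I J : R -> Prop) : R -> Prop :=
  fun z => exists s : seq (R * R),
    (forall u, u \in s -> I u.1 /\ J u.2) /\ z = \sum_(u <- s) u.1 * u.2.

Definition ideal_dvd (I A : R -> Prop) : Prop :=
  exists J, is_ideal J /\ forall z, A z <-> ideal_mul I J z.

Definition square_free (a : R) : Prop :=
  forall P, is_prime_ideal P -> ~ ideal_dvd (ideal_mul P P) (principal_ideal a).

Definition noetherian : Prop :=
  forall I : nat -> R -> Prop, (forall k, is_ideal (I k)) ->
    (forall k x, I k x -> I k.+1 x) ->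
    exists N, forall k x, (N <= k)%N -> I k x -> I N x.

Definition integrally_closed_domain : Prop :=
  forall x : {fraction R},
    (exists p : {poly R}, p \is monic /\ root (map_poly (@tofrac R) p) x) ->
    exists r : R, x = tofrac r.

Definition nonzero_primes_maximal : Prop :=
  forall P, is_prime_ideal P -> (exists x, P x /\ x != 0) ->
    forall J, is_ideal J -> (forall x, P x -> J x) ->
      J 1 \/ (forall x, J x -> P x).

Definition dedekind : Prop :=
  [/\ noetherian, integrally_closed_domain & nonzero_primes_maximal].

Definition irreducible_over (f : {poly R}) : Prop :=
  [/\ f != 0, f \isn't a GRing.unit &
      forall g h : {poly R}, f = g * h -> g \is a GRing.unit \/ h \is a GRing.unit].
End Ideals.

Definition frac_emb (R : idomainType) (L : fieldExtType {fraction R}) (r : R) : L :=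
  (tofrac r)%:A.

Definition adjoin_ring (R : idomainType) (L : fieldExtType {fraction R})
  (alpha : L) : L -> Prop :=
  fun x => exists p : {poly R}, x = (map_poly (@frac_emb R L) p).[alpha].

Definition integral_over (L : fieldType) (S : L -> Prop) (x : L) : Prop :=
  exists p : {poly L}, [/\ p \is monic, (forall i, S p`_i) & root p x].

(* Main.v *)
From HB Require Import structures.
From mathcomp Require Import all_boot all_order all_algebra all_field.
From mathcomp Require Import ring.
Set Implicit Arguments. Unset Strict Implicit. Unset Printing Implicit Defensive.
Import GRing.Theory.
Local Open Scope ring_scope.
Require Import Defs.

Lemma monic_size1 (A : nzRingType) (q : {poly A}) : q \is monic -> size q = 1%N -> q = 1.
Proof. by move=> qm /eqP/size_poly1P [c _ qc]; move: qm; rewrite qc monicE lead_coefC => /eqP ->. Qed.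

Section QP.
Variables (A : comNzRingType) (g : {poly A}).
Hypotheses (gm : g \is monic) (gs : (1 < size g)%N).

Lemma mk_monic_g : mk_monic g = g.
Proof. by rewrite /mk_monic gs gm. Qed.

Lemma in_qpolyC c : in_qpoly g c%:P = qpolyC g c.
Proof.
apply: val_inj => /=; apply: Pdiv.Ring.rmodp_small; rewrite mk_monic_g.
by apply: leq_ltn_trans gs; rewrite size_polyC leq_b1.
Qed.

Lemma qpoly_horner p : (map_poly (qpolyC g) p).[in_qpoly g 'X] = in_qpoly g p.
Proof.
elim/poly_ind: p => [|p c IH]; first by rewrite rmorph0 horner0 rmorph0.
rewrite rmorphD rmorphM /= map_polyX map_polyC hornerMXaddC IH.
by rewrite rmorphD rmorphM /= in_qpolyC.
Qed.

Lemma qpoly_root : root (map_poly (qpolyC g) g) (in_qpoly g 'X).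
Proof.
rewrite /root qpoly_horner; apply/eqP; apply: val_inj => /=.
by rewrite mk_monic_g Pdiv.RingMonic.rmodpp.
Qed.

Lemma qpolyC_inj : injective (qpolyC g).
Proof. by move=> a b /(congr1 val) /= /polyC_inj. Qed.

End QP.

Lemma split_alg (n : nat) : forall (A : comNzRingType) (g : {poly A}),
  g \is monic -> (size g <= n.+1)%N ->
  exists B : comNzRingType, exists j : {rmorphism A -> B},
    injective j /\ exists rs : seq B, map_poly j g = \prod_(r <- rs) ('X - r%:P).
Proof.
elim: n => [|n IH] A g gm gs.
  exists A, idfun; split => //; exists [::]; rewrite big_nil map_poly_id //.
  apply: monic_size1 => //; apply/eqP; rewrite eqn_leq gs lt0n size_poly_eq0.
  exact: monic_neq0.
case: (leqP (size g) 1) => g1.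
  exists A, idfun; split => //; exists [::]; rewrite big_nil map_poly_id //.
  apply: monic_size1 => //; apply/eqP; rewrite eqn_leq g1 lt0n size_poly_eq0.
  exact: monic_neq0.
pose x := in_qpoly g 'X.
have := qpoly_root gm g1; rewrite -/x => /factor_theorem [q1 Hq1].
have xm : ('X - x%:P) \is monic by apply: monicXsubC.
have q1m : q1 \is monic by rewrite -(monicMr _ xm) -Hq1; apply: monic_map.
have q1s : (size q1 <= n.+1)%N.
  have : size (map_poly (qpolyC g) g) = size g.
    by apply: size_map_inj_poly; [apply: qpolyC_inj | rewrite rmorph0].
  rewrite Hq1 size_Mmonic ?monic_neq0 // size_XsubC addn2 /= => Hs.
  by rewrite -ltnS Hs.
have [B [j2 [j2i [rs Hrs]]]] := IH _ q1 q1m q1s.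
exists B, (j2 \o qpolyC g); split.
  by apply: inj_comp => //; apply: qpolyC_inj.
exists (j2 x :: rs); rewrite big_cons map_poly_comp Hq1 rmorphM /= Hrs.
by rewrite map_polyXsubC mulrC.
Qed.

Section Integral.
Variables (R B : comNzRingType) (phi : {rmorphism R -> B}).

Definition intB (y : B) := exists p : {poly R}, p \is monic /\ root (map_poly phi p) y.

Definition spanB (v : seq B) (y : B) :=
  exists s : seq (R * B), (forall u, u \in s -> u.2 \in v) /\
     y = \sum_(u <- s) phi u.1 * u.2.

Lemma span_elim (v : seq B) (Q : B -> Prop) :
  Q 0 -> (forall a b, Q a -> Q b -> Q (a + b)) ->
  (forall r x, x \in v -> Q (phi r * x)) -> forall y, spanB v y -> Q y.
Proof.
move=> Q0 QD QG y [s [Hs ->]]; elim: s Hs => [|u s IH] Hs; first by rewrite big_nil.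
rewrite big_cons; apply: QD; first by apply: QG; apply: Hs; rewrite mem_head.
by apply: IH => w Hw; apply: Hs; rewrite in_cons Hw orbT.
Qed.

Lemma span0 v : spanB v 0.
Proof. by exists [::]; split => //; rewrite big_nil. Qed.

Lemma spanD v x y : spanB v x -> spanB v y -> spanB v (x + y).
Proof.
move=> [s1 [H1 ->]] [s2 [H2 ->]]; exists (s1 ++ s2); split; last by rewrite big_cat.
by move=> u; rewrite mem_cat => /orP[/H1|/H2].
Qed.

Lemma span_gen v r x : x \in v -> spanB v (phi r * x).
Proof.
by move=> Hx; exists [:: (r, x)]; split; [move=> u; rewrite inE => /eqP -> | rewrite big_seq1].
Qed.

Lemma span_mem v x : x \in v -> spanB v x.
Proof. by move=> Hx; rewrite -[x]mul1r -(rmorph1 phi); apply: span_gen. Qed.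

Lemma spanZ v r y : spanB v y -> spanB v (phi r * y).
Proof.
move: y; apply: span_elim; first by rewrite mulr0; apply: span0.
  by move=> a b Ha Hb; rewrite mulrDr; apply: spanD.
by move=> r' x Hx; rewrite mulrA -rmorphM; apply: span_gen.
Qed.

Lemma spanN v y : spanB v y -> spanB v (- y).
Proof. by move=> H; rewrite -mulN1r -(rmorph1 phi) -rmorphN; apply: spanZ. Qed.

Lemma spanB_sum v (I : eqType) (r : seq I) (F : I -> B) :
  (forall i, i \in r -> spanB v (F i)) -> spanB v (\sum_(i <- r) F i).
Proof.
elim: r => [|i r IH] H; first by rewrite big_nil; apply: span0.
rewrite big_cons; apply: spanD; first by apply: H; rewrite mem_head.
by apply: IH => j Hj; apply: H; rewrite in_cons Hj orbT.
Qed.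

Lemma span_mono v w y : (forall x, x \in v -> spanB w x) -> spanB v y -> spanB w y.
Proof.
move=> Hvw; move: y; apply: span_elim; first exact: span0.
  by move=> a b; apply: spanD.
by move=> r x /Hvw; apply: spanZ.
Qed.

Definition fsub (v : seq B) :=
  spanB v 1 /\ (forall x y, x \in v -> y \in v -> spanB v (x * y)).

Lemma fsub_mul v x y : fsub v -> spanB v x -> spanB v y -> spanB v (x * y).
Proof.
move=> [_ Hm] Hx Hy; move: x Hx; apply: span_elim.
- by rewrite mul0r; apply: span0.
- by move=> a b Ha Hb; rewrite mulrDl; apply: spanD.
move=> r x Hx; rewrite -mulrA; apply: spanZ; move: y Hy; apply: span_elim.
- by rewrite mulr0; apply: span0.
- by move=> a b Ha Hb; rewrite mulrDr; apply: spanD.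
by move=> r' x' Hx'; rewrite mulrCA; apply: spanZ; apply: Hm.
Qed.

Lemma fsub_phi v r : fsub v -> spanB v (phi r).
Proof. by move=> [H1 _]; rewrite -[phi r]mulr1; apply: spanZ. Qed.

Lemma span_idx v y : spanB v y ->
  exists c : 'I_(size v) -> R, y = \sum_(i < size v) phi (c i) * v`_i.
Proof.
move: y; apply: span_elim.
- by exists (fun _ => 0); rewrite big1 // => i _; rewrite rmorph0 mul0r.
- move=> a b [c1 ->] [c2 ->]; exists (fun i => c1 i + c2 i).
  by rewrite -big_split; apply: eq_bigr => i _; rewrite rmorphD mulrDl.
move=> r x Hx; have Hi : (index x v < size v)%N by rewrite index_mem.
exists (fun i : 'I_(size v) => if i == Ordinal Hi then r else 0).
rewrite (bigD1 (Ordinal Hi)) //= eqxx nth_index // big1 ?addr0 // => i /negPf ->.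
by rewrite rmorph0 mul0r.
Qed.

Lemma det_trick v y : fsub v -> spanB v y -> intB y.
Proof.
move=> Hf Hy; set N := size v.
have [c Hc] := span_idx (proj1 Hf).
have H : forall i : 'I_N, exists ci : 'I_N -> R,
    y * v`_i = \sum_(j < N) phi (ci j) * v`_j.
  move=> i; apply: span_idx; apply: fsub_mul => //.
  by rewrite -[v`_i]mul1r -(rmorph1 phi); apply: span_gen; apply: mem_nth.
have [M HM] := fin_all_exists H.
pose Mm : 'M[R]_N := \matrix_(i, j) M i j.
pose A : 'M[B]_N := y%:M - map_mx phi Mm.
pose V : 'cV[B]_N := \col_i v`_i.
have AV : A *m V = 0.
  apply/matrixP => i k; rewrite mulmxBl mul_scalar_mx !mxE.
  rewrite (HM i); apply/eqP; rewrite subr_eq0; apply/eqP.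
  by apply: eq_bigr => j _; rewrite !mxE.
have dV : forall i : 'I_N, \det A * v`_i = 0.
  move=> i; have : (\det A)%:M *m V = 0 by rewrite -mul_adj_mx -mulmxA AV mulmx0.
  move/matrixP => /(_ i 0); rewrite mul_scalar_mx !mxE.
  by [].
have d0 : \det A = 0.
  rewrite -[\det A]mulr1 Hc mulr_sumr big1 // => i _.
  by rewrite mulrCA dV mulr0.
exists (char_poly Mm); split; first exact: char_poly_monic.
rewrite map_char_poly /root -horner_evalE -det_map_mx.
apply/eqP; transitivity (\det A); last exact: d0; congr (\det _).
apply/matrixP => i j; rewrite !mxE.
by rewrite /= horner_evalE hornerD hornerN hornerMn hornerX hornerC.
Qed.

End Integral.




Section Ext.
Variables (R B : comNzRingType) (phi : {rmorphism R -> B}).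
Local Notation spanB := (spanB phi).
Local Notation fsub := (fsub phi).
Local Notation intB := (intB phi).

Lemma fsub_ext (v : seq B) (q : {poly B}) (y : B) :
  fsub v -> q \is monic -> (forall i, spanB v q`_i) -> root q y ->
  exists w, [/\ fsub w, (forall x, spanB v x -> spanB w x) & spanB w y].
Proof.
move=> Hv qm Hq ry.
set m := (size q).-1.
have szq : size q = m.+1.
  rewrite /m prednK //; rewrite lt0n size_poly_eq0; exact: monic_neq0.
have m0 : (0 < m)%N.
  rewrite lt0n; apply/negP => /eqP m0; move: ry; rewrite /root.
  have -> : q = 1 by apply: monic_size1; rewrite // szq m0.
  by rewrite hornerC oner_eq0.
pose w := [seq x * y ^+ k | x <- v, k <- iota 0 m].
have Ha : forall x k, spanB v x -> (k < m)%N -> spanB w (x * y ^+ k).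
  move=> x k Hx km; move: x Hx; apply: span_elim.
  - by rewrite mul0r; apply: span0.
  - by move=> a b Ha Hb; rewrite mulrDl; apply: spanD.
  move=> r x Hx; rewrite -mulrA; apply: span_gen.
  by apply: allpairs_f => //; rewrite mem_iota add0n km.
have ym : y ^+ m = - \sum_(i < m) q`_i * y ^+ i.
  move/rootP: ry; rewrite horner_coef szq big_ord_recr /=.
  have -> : q`_m = 1 by move/monicP: qm; rewrite /lead_coef szq.
  by rewrite mul1r addrC => /eqP; rewrite addr_eq0 => /eqP.
have Hb : forall k x, spanB v x -> spanB w (x * y ^+ k).
  elim/ltn_ind => k IH x Hx.
  case: (ltnP k m) => km; first exact: Ha.
  rewrite -(subnK km) exprD ym mulrN mulr_sumr mulrN; apply: spanN.
  rewrite mulr_sumr; apply: spanB_sum => i _.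
  rewrite [y ^+ _ * _]mulrCA -exprD mulrA; apply: IH; last first.
    by apply: fsub_mul => //.
  by rewrite -{2}(subnK km) ltn_add2l ltn_ord.
have Hw1 : spanB w 1 by rewrite -[1]mulr1 -[X in _ * X](expr0 y); apply: Ha => //; exact: proj1 Hv.
exists w; split.
- split => // a b /allpairsP [[x k] [Hx Hk ->]] /allpairsP [[x' k'] [Hx' Hk' ->]] /=.
  rewrite mulrACA -exprD; apply: Hb; apply: fsub_mul => //; exact: span_mem.
- by move=> x Hx; rewrite -[x]mulr1 -(expr0 y); apply: Ha.
by rewrite -[y]mul1r -[y]expr1; apply: Hb; exact: proj1 Hv.
Qed.

Lemma fsub1 : fsub [:: 1].
Proof.
have H1 : spanB [:: 1] 1 by apply: span_mem; rewrite mem_head.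
by split => // x y; rewrite !inE => /eqP -> /eqP ->; rewrite mulr1.
Qed.

Lemma int_ext v y : fsub v -> intB y ->
  exists w, [/\ fsub w, (forall x, spanB v x -> spanB w x) & spanB w y].
Proof.
move=> Hv [p [pm rp]]; apply: (fsub_ext Hv) rp; first exact: monic_map.
by move=> i; rewrite coef_map; apply: fsub_phi.
Qed.

Lemma int_fsub y : intB y -> exists w, fsub w /\ spanB w y.
Proof. by move=> /(int_ext fsub1) [w [Hw _ Hy]]; exists w. Qed.

Lemma int_fsub_seq (s : seq B) : (forall x, x \in s -> intB x) ->
  exists v, fsub v /\ forall x, x \in s -> spanB v x.
Proof.
elim: s => [|x s IH] Hs; first by exists [:: 1]; split => //; exact: fsub1.
have [|v [Hv Hsv]] := IH; first by move=> z Hz; apply: Hs; rewrite in_cons Hz orbT.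
have [w [Hw Hvw Hx]] := int_ext Hv (Hs x (mem_head _ _)).
exists w; split => // z; rewrite in_cons => /orP [/eqP -> //|/Hsv]; exact: Hvw.
Qed.

Lemma intB_add x y : intB x -> intB y -> intB (x + y).
Proof.
move=> Hx Hy; have [v [Hv Hvx]] := int_fsub Hx.
have [w [Hw Hvw Hy']] := int_ext Hv Hy.
by apply: (det_trick Hw); apply: spanD => //; apply: Hvw.
Qed.

Lemma intB_mul x y : intB x -> intB y -> intB (x * y).
Proof.
move=> Hx Hy; have [v [Hv Hvx]] := int_fsub Hx.
have [w [Hw Hvw Hy']] := int_ext Hv Hy.
by apply: (det_trick Hw); apply: fsub_mul => //; apply: Hvw.
Qed.

Lemma intB_phi r : intB (phi r).
Proof.
exists ('X - r%:P); split; first exact: monicXsubC.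
by rewrite map_polyXsubC root_XsubC.
Qed.

Lemma intB_opp x : intB x -> intB (- x).
Proof. by move=> Hx; rewrite -mulN1r -(rmorph1 phi) -rmorphN; apply: intB_mul => //; apply: intB_phi. Qed.

Lemma intB_trans (q : {poly B}) y : q \is monic -> (forall i, intB q`_i) -> root q y -> intB y.
Proof.
move=> qm Hq ry.
have Hs0 : forall x, x \in (q : seq B) -> intB x.
  by move=> x /(nthP 0) [i _ <-]; apply: Hq.
have [v [Hv Hs]] := int_fsub_seq Hs0.
have Hc : forall i, spanB v q`_i.
  move=> i; case: (ltnP i (size q)) => Hi; first by apply: Hs; apply: mem_nth.
  by rewrite nth_default //; apply: span0.
have [w [Hw _ Hy]] := fsub_ext Hv qm Hc ry.
exact: det_trick Hw Hy.
Qed.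

End Ext.

Section IntPoly.
Variables (R B : comNzRingType) (phi : {rmorphism R -> B}).
Definition intpoly (p : {poly B}) := forall i, intB phi p`_i.

Lemma intB0 : intB phi 0.
Proof. by rewrite -(rmorph0 phi); apply: intB_phi. Qed.

Lemma intB_sum (I : Type) (r : seq I) (F : I -> B) :
  (forall i, intB phi (F i)) -> intB phi (\sum_(i <- r) F i).
Proof.
move=> H; elim: r => [|i r IH]; first by rewrite big_nil; apply: intB0.
by rewrite big_cons; apply: intB_add.
Qed.

Lemma intpolyM p q : intpoly p -> intpoly q -> intpoly (p * q).
Proof.
move=> Hp Hq i; rewrite coefM; apply: intB_sum => k; exact: intB_mul.
Qed.

Lemma intpolyXsubC r : intB phi r -> intpoly ('X - r%:P).
Proof.
move=> Hr i; rewrite coefB coefX coefC; apply: intB_add.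
  by rewrite -(rmorph_nat phi); apply: intB_phi.
by apply: intB_opp; case: (i == 0)%N => //; apply: intB0.
Qed.

Lemma intpoly_prod (rs : seq B) : (forall r, r \in rs -> intB phi r) ->
  intpoly (\prod_(r <- rs) ('X - r%:P)).
Proof.
elim: rs => [|r rs IH] H.
  rewrite big_nil => i; rewrite coefC; case: (i == 0)%N.
    by rewrite -(rmorph1 phi); apply: intB_phi.
  exact: intB0.
rewrite big_cons; apply: intpolyM; first by apply: intpolyXsubC; apply: H; rewrite mem_head.
by apply: IH => x Hx; apply: H; rewrite in_cons Hx orbT.
Qed.

End IntPoly.

Section Gauss.
Variable R : idomainType.
Local Notation K := {fraction R}.
Local Notation tf := (@tofrac R).

Lemma coefMXaddC (A : nzRingType) (p : {poly A}) c i :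
  (p * 'X + c%:P)`_i = if (i == 0)%N then c else p`_i.-1.
Proof. by rewrite -cons_poly_def coef_cons. Qed.

Lemma tofrac_inj : injective tf.
Proof. by move=> x y /eqP; rewrite tofrac_eq => /eqP. Qed.

Lemma lift_poly (g : {poly K}) : (forall i, exists r, g`_i = tf r) ->
  exists gR : {poly R}, g = map_poly tf gR.
Proof.
elim/poly_ind: g => [|p c IH] Hg; first by exists 0; rewrite rmorph0.
have [pR ->] : exists pR, p = map_poly tf pR.
  by apply: IH => i; have [r Hr] := Hg i.+1; exists r; rewrite -Hr coefMXaddC.
have [cR Hc] := Hg 0%N; rewrite coefMXaddC /= in Hc.
by exists (pR * 'X + cR%:P); rewrite rmorphD rmorphM /= map_polyX map_polyC /= Hc.
Qed.

Lemma int_in_K (B : comNzRingType) (j : {rmorphism K -> B}) (c : K) :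
  integrally_closed_domain R -> injective j ->
  intB (j \o tf) (j c) -> exists r, c = tf r.
Proof.
move=> icd ji [p [pm rp]]; apply: icd; exists p; split => //.
move: rp; rewrite map_poly_comp /root horner_map /= => /eqP.
by rewrite -(rmorph0 j) => /ji ->.
Qed.

Lemma gauss (f : {poly R}) (g h : {poly K}) :
  integrally_closed_domain R -> f \is monic ->
  map_poly tf f = g * h -> g \is monic -> exists gR, g = map_poly tf gR.
Proof.
move=> icd fm Hf gm.
have [B [j [ji [rs Hrs]]]] := split_alg gm (leqnSn _).
have Hr : forall r, r \in rs -> intB (j \o tf) r.
  move=> r Hr; exists f; split => //.
  rewrite map_poly_comp Hf rmorphM /= /root hornerM.
  have -> : (map_poly j g).[r] = 0.
    by rewrite Hrs horner_prod (big_rem r) //= hornerXsubC subrr mul0r.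
  by rewrite mul0r.
apply: lift_poly => i; apply: (int_in_K icd ji).
by rewrite -coef_map Hrs; apply: intpoly_prod.
Qed.

End Gauss.

Section Euler.
Variables (B : comNzRingType) (p : {poly B}).

Fixpoint Qf (rs : seq B) : {poly B} :=
  match rs with
  | [::] => 0
  | r :: rs' => p.[r] *: \prod_(x <- rs') ('X - x%:P) + ('X - r%:P) * Qf rs'
  end.

Lemma Qf_eq rs : exists U, Qf rs = p * (\prod_(x <- rs) ('X - x%:P))^`() -
                              \prod_(x <- rs) ('X - x%:P) * U.
Proof.
elim: rs => [|r rs [U IH]] /=.
  by exists 0; rewrite big_nil mulr0 subr0 -polyC1 derivC mulr0.
have [q Hq] : exists q, p - p.[r]%:P = q * ('X - r%:P).
  by apply/factor_theorem; rewrite /root hornerD hornerN hornerC subrr.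
exists (q + U); rewrite big_cons derivM derivXsubC IH -mul_polyC.
have -> : p.[r]%:P = p - q * ('X - r%:P) by rewrite -Hq opprB addrC subrK.
set F := \prod_(x <- rs) _.
by ring.
Qed.

Lemma Qf_size rs : (size (Qf rs) <= size rs)%N.
Proof.
elim: rs => [|r rs IH] /=; first by rewrite size_poly0.
apply: leq_trans (size_polyD _ _) _; rewrite geq_max; apply/andP; split.
  apply: leq_trans (size_scale_leq _ _) _.
  by rewrite size_prod_XsubC.
apply: leq_trans (size_mul_leq _ _) _; rewrite size_XsubC addSn /=.
by rewrite ltnS.
Qed.

Lemma Qf_int (R : comNzRingType) (phi : {rmorphism R -> B}) rs :
  (forall r, r \in rs -> intB phi r /\ intB phi p.[r]) -> intpoly phi (Qf rs).
Proof.
elim: rs => [|r rs IH] H /=.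
  by move=> i; rewrite coef0; apply: intB0.
have [Hr Hpr] := H r (mem_head _ _).
have Hrs : forall x, x \in rs -> intB phi x /\ intB phi p.[x].
  by move=> x Hx; apply: H; rewrite in_cons Hx orbT.
move=> i; rewrite coefD coefZ; apply: intB_add.
  apply: intB_mul => //; apply: intpoly_prod => x /Hrs []//.
by apply: intpolyM; [apply: intpolyXsubC | apply: IH].
Qed.

End Euler.

Lemma monic_rem_uniq (A : comNzRingType) (m a b c : {poly A}) :
  m \is monic -> (size a < size m)%N -> (size b < size m)%N ->
  a - b = m * c -> a = b.
Proof.
move=> mm sa sb Hc; apply/eqP; rewrite -subr_eq0 Hc.
case: (eqVneq c 0) => [->|cn0]; first by rewrite mulr0.
have : (size (a - b)%R < size m)%N.
  by apply: leq_ltn_trans (size_polyD _ _) _; rewrite size_polyN gtn_max sa sb.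
rewrite Hc size_monicM // => H; exfalso; move: H.
have : (0 < size c)%N by rewrite lt0n size_poly_eq0.
by case: (size c) => // k _; rewrite addnS /= ltnNge leq_addr.
Qed.

Section EulerK.
Variable R : idomainType.
Local Notation K := {fraction R}.
Local Notation tf := (@tofrac R).

Lemma euler_K (f : {poly R}) (p : {poly K}) :
  integrally_closed_domain R -> f \is monic ->
  (exists h : {poly R}, h \is monic /\ (map_poly tf f %| (map_poly tf h \Po p))%R) ->
  exists (w : {poly R}) (D : {poly K}),
    map_poly tf w = p * (map_poly tf f)^`() - map_poly tf f * D.
Proof.
move=> icd fm [h [hm Hdv]].
set fK := map_poly tf f.
have fKm : fK \is monic by apply: monic_map.
have [B [j [ji [rs Hrs]]]] := split_alg fKm (leqnSn _).
set W := Pdiv.Ring.rmodp (p * fK^`()) fK.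
set D := Pdiv.Ring.rdivp (p * fK^`()) fK.
have HW : W = p * fK^`() - fK * D.
  have E := Pdiv.RingMonic.rdivp_eq fKm (p * fK^`()); rewrite -/D -/W in E.
  by rewrite [p * _]E; ring.
have szW : (size W < size fK)%N.
  by apply: Pdiv.Ring.ltn_rmodpN0; apply: monic_neq0.
have szrs : size fK = (size rs).+1.
  rewrite -(size_map_inj_poly ji (rmorph0 j)) Hrs size_prod_XsubC //.
have [U HU] := Qf_eq (map_poly j p) rs.
have QW : Qf (map_poly j p) rs = map_poly j W.
  apply: (@monic_rem_uniq _ (map_poly j fK) _ _ (map_poly j D - U)).
  - exact: monic_map.
  - by rewrite (size_map_inj_poly ji (rmorph0 j)) szrs ltnS Qf_size.
  - by rewrite !(size_map_inj_poly ji (rmorph0 j)).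
  rewrite HU HW rmorphB !rmorphM /= -deriv_map Hrs; ring.
have /dvdpP [dq Hdq] := Hdv.
have Hint : forall r, r \in rs -> intB (j \o tf) r /\ intB (j \o tf) (map_poly j p).[r].
  move=> r Hr.
  have r0 : (map_poly j fK).[r] = 0.
    by rewrite Hrs horner_prod (big_rem r) //= hornerXsubC subrr mul0r.
  split.
    by exists f; split => //; rewrite map_poly_comp /root r0.
  exists h; split => //; rewrite /root map_poly_comp -horner_comp -map_comp_poly.
  by rewrite Hdq rmorphM /= hornerM r0 mulr0.
have Wi := Qf_int Hint.
have [w Hw] : exists w, W = map_poly tf w.
  apply: lift_poly => i; apply: (int_in_K icd ji).
  by rewrite -coef_map -QW; apply: Wi.
by exists w, D; rewrite -Hw.
Qed.
End EulerK.

Section IntMore.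
Variables (R B : comNzRingType) (phi : {rmorphism R -> B}).

Lemma intB_exp x k : intB phi x -> intB phi (x ^+ k).
Proof.
move=> Hx; elim: k => [|k IH]; first by rewrite expr0 -(rmorph1 phi); apply: intB_phi.
by rewrite exprS; apply: intB_mul.
Qed.

Lemma intB_horner (q : {poly B}) y : (forall i, intB phi q`_i) -> intB phi y -> intB phi q.[y].
Proof.
move=> Hq Hy; rewrite horner_coef; apply: intB_sum => i.
by apply: intB_mul => //; apply: intB_exp.
Qed.

End IntMore.

From Stdlib Require Import Classical ClassicalEpsilon.

Section Ideals2.
Variable R : idomainType.
Local Notation K := {fraction R}.
Local Notation tf := (@tofrac R).

Lemma noeth_max (T : Type) (Z : T -> Prop) (C : T -> R -> Prop) :
  noetherian R -> (forall z, Z z -> is_ideal (C z)) -> forall z0, Z z0 ->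
  exists z, Z z /\ forall z', Z z' -> (forall r, C z r -> C z' r) -> forall r, C z' r -> C z r.
Proof.
move=> Hn HC z0 Hz0; apply: NNPP => Hno.
have H : forall z : {z | Z z}, exists z' : {z | Z z},
    (forall r, C (sval z) r -> C (sval z') r) /\ exists r, C (sval z') r /\ ~ C (sval z) r.
  move=> [z Hz]; apply: NNPP => Hne; apply: Hno; exists z; split => // z' Hz' Hsub r Hr.
  apply: NNPP => Hr'; apply: Hne; exists (exist _ z' Hz'); split => //; by exists r.
pose next (z : {z | Z z}) := proj1_sig (constructive_indefinite_description _ (H z)).
have Hnext : forall z, (forall r, C (sval z) r -> C (sval (next z)) r) /\
    exists r, C (sval (next z)) r /\ ~ C (sval z) r.
  by move=> z; rewrite /next; case: constructive_indefinite_description.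
pose s k := iter k next (exist _ z0 Hz0).
have [N HN] := Hn (fun k => C (sval (s k))) (fun k => HC _ (proj2_sig (s k)))
  (fun k x => (proj1 (Hnext (s k))) x).
have [r [Hr1 Hr2]] := proj2 (Hnext (s N)).
by apply: Hr2; apply: (HN N.+1) => //.
Qed.

Lemma ideal0 (P : R -> Prop) : is_ideal P -> P 0.
Proof. by case. Qed.
Lemma idealD (P : R -> Prop) x y : is_ideal P -> P x -> P y -> P (x + y).
Proof. by case=> _ H _; apply: H. Qed.
Lemma idealM (P : R -> Prop) r x : is_ideal P -> P x -> P (r * x).
Proof. by case=> _ _ H; apply: H. Qed.
Lemma idealMr (P : R -> Prop) r x : is_ideal P -> P x -> P (x * r).
Proof. by move=> HP Hx; rewrite mulrC; apply: idealM. Qed.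
Lemma idealN (P : R -> Prop) x : is_ideal P -> P x -> P (- x).
Proof. by move=> HP Hx; rewrite -mulN1r; apply: idealM. Qed.

Lemma prime_pow (P : R -> Prop) x k : is_prime_ideal P -> P (x ^+ k) -> P x.
Proof.
case=> HP H1 Hm; elim: k => [|k IH]; first by rewrite expr0 => /H1.
by rewrite exprS => /Hm [].
Qed.

Lemma sum_lift (M : R -> Prop) (I : eqType) (s : seq I) (F : I -> K) :
  M 0 -> (forall x y, M x -> M y -> M (x + y)) ->
  (forall i, i \in s -> exists y, M y /\ tf y = F i) ->
  exists y, M y /\ tf y = \sum_(i <- s) F i.
Proof.
move=> M0 MD; elim: s => [|i s IH] H; first by exists 0; rewrite big_nil rmorph0.
have [y1 [M1 E1]] := H i (mem_head _ _).
have [|y2 [M2 E2]] := IH; first by move=> k Hk; apply: H; rewrite in_cons Hk orbT.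
by exists (y1 + y2); split; [apply: MD | rewrite big_cons -E1 -E2 rmorphD].
Qed.

Lemma monicXn_sub (A : nzRingType) (N : nat) (g : {poly A}) :
  (size g <= N)%N -> 'X^N - g \is monic.
Proof.
move=> Hg; rewrite monicE lead_coefDl ?lead_coefXn // size_polyN size_polyXn ltnS //.
Qed.

Lemma chain_int (q : K) (P : R -> Prop) (a : R) :
  integrally_closed_domain R -> noetherian R -> is_ideal P -> P a -> a != 0 ->
  (forall p, P p -> exists r, q * tf p = tf r /\ P r) -> exists r, q = tf r.
Proof.
move=> Hicd Hn HP Pa a0 Hq.
pose I k r := exists g : {poly R}, (size g <= k)%N /\ tf r = tf a * (map_poly tf g).[q].
have HI : forall k, is_ideal (I k).
  move=> k; split.
  - by exists 0; rewrite size_poly0 map_poly0 horner0 mulr0 rmorph0.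
  - move=> x y [g1 [s1 E1]] [g2 [s2 E2]]; exists (g1 + g2); split.
      by apply: leq_trans (size_polyD _ _) _; rewrite geq_max s1 s2.
    by rewrite tofracD E1 E2 rmorphD hornerD mulrDr.
  - move=> r x [g [s1 E1]]; exists (r *: g); split.
      by apply: leq_trans (size_scale_leq _ _) _.
    by rewrite tofracM E1 linearZ /= hornerZ mulrCA.
have HIinc : forall k x, I k x -> I k.+1 x.
  by move=> k x [g [s1 E1]]; exists g; split => //; apply: leqW.
have [N HN] := Hn I HI HIinc.
have Hpow : forall k, exists r, tf r = tf a * q ^+ k /\ P r.
  elim=> [|k [r [Er Pr]]]; first by exists a; rewrite expr0 mulr1.
  have [r' [Er' Pr']] := Hq r Pr; exists r'; split => //.
  by rewrite -Er' Er exprS mulrCA.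
have [r [Er Pr]] := Hpow N.
have : I N.+1 r by exists 'X^N; rewrite size_polyXn map_polyXn hornerXn.
move=> /(HN N.+1 r (leqnSn N)) [g [sg Eg]].
have Eq : q ^+ N = (map_poly tf g).[q].
  apply: (mulfI (x := tf a)); first by rewrite tofrac_eq0.
  by rewrite -Er.
apply: Hicd; exists ('X^N - g); split; first exact: monicXn_sub.
by rewrite /root rmorphB /= map_polyXn hornerD hornerN hornerXn Eq subrr.
Qed.

End Ideals2.
From mathcomp Require Import zify.

Section Main.
Variables (R : idomainType) (L : fieldExtType {fraction R}) (n : nat) (a : R) (th : L).
Local Notation K := {fraction R}.
Local Notation tf := (@tofrac R).
Local Notation iK := (in_alg L).
Local Notation io := (in_alg L \o @tofrac R).
Local Notation f := ('X^n - a%:P : {poly R}).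
Local Notation fK := (map_poly tf f).

Hypothesis Hicd : integrally_closed_domain R.
Hypothesis Hirr : irreducible_over f.
Hypothesis Hroot : root (map_poly io f) th.
Hypothesis Hn : (0 < n)%N.

Lemma fm : f \is monic.
Proof. exact: monicXnsubC. Qed.

Lemma fKm : fK \is monic.
Proof. exact: monic_map fm. Qed.

Lemma size_fK : size fK = n.+1.
Proof.
rewrite (size_map_inj_poly (@tofrac_inj R) (rmorph0 _)).
by rewrite size_polyDl ?size_polyXn // size_polyN size_polyC ltnS (leq_trans (leq_b1 _)).
Qed.

Lemma map_ioK (p : {poly R}) : map_poly io p = map_poly iK (map_poly tf p).
Proof. by rewrite map_poly_comp. Qed.

Lemma minPoly_th : minPoly 1%AS th = map_poly iK fK.
Proof.
have /polyOver1P [mu Hmu] := minPolyOver 1%AS th.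
have mum : mu \is monic by move: (monic_minPoly 1%AS th); rewrite Hmu map_monic.
have Hdv : mu %| fK.
  rewrite -(dvdp_map iK) -Hmu; apply: minPoly_dvdp.
    by apply/polyOver1P; exists fK.
  by rewrite -map_ioK.
have Hfac : fK = (fK %/ mu) * mu by rewrite divpK.
have num : fK %/ mu \is monic by rewrite -(monicMr _ mum) -Hfac fKm.
have [muR HmuR] := gauss Hicd fm (etrans Hfac (mulrC _ _)) mum.
have [nuR HnuR] := gauss Hicd fm Hfac num.
have Hf : f = nuR * muR.
  apply: (map_inj_poly (@tofrac_inj R) (rmorph0 _)).
  by rewrite rmorphM /= -HmuR -HnuR.
have [_ _ Hi] := Hirr; case: (Hi _ _ Hf); rewrite poly_unitE => /andP [/eqP s1 _].
  have nu1 : fK %/ mu = 1.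
    apply: monic_size1 => //; rewrite HnuR.
    by rewrite (size_map_inj_poly (@tofrac_inj R) (rmorph0 _)) s1.
  by rewrite Hmu Hfac nu1 mul1r.
exfalso; have := size_minPoly 1%AS th; rewrite Hmu HmuR.
rewrite (size_map_inj_poly (fmorph_inj iK) (rmorph0 _)).
by rewrite (size_map_inj_poly (@tofrac_inj R) (rmorph0 _)) s1.
Qed.


Lemma adeg_th : adjoin_degree 1%AS th = n.
Proof.
have := size_minPoly 1%AS th; rewrite minPoly_th.
by rewrite (size_map_inj_poly (fmorph_inj iK) (rmorph0 _)) size_fK => -[].
Qed.

Lemma coordP x : x \in <<1%VS; th>>%VS ->
  exists c : {poly K}, (size c <= n)%N /\ x = (map_poly iK c).[th].
Proof.
move=> Hx; have /polyOver1P [c Hc] := Fadjoin_polyOver 1%AS th x.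
exists c; split; last by rewrite -Hc Fadjoin_poly_eq.
rewrite -(size_map_inj_poly (fmorph_inj iK) (rmorph0 _)) -Hc -adeg_th.
exact: size_Fadjoin_poly.
Qed.

Lemma root_dvd (c : {poly K}) : (map_poly iK c).[th] = 0 -> fK %| c.
Proof.
move=> Hc; rewrite -(dvdp_map iK) -minPoly_th; apply: minPoly_dvdp.
  by apply/polyOver1P; exists c.
by apply/rootP.
Qed.

Lemma coord_uniq (c : {poly K}) : (size c <= n)%N -> (map_poly iK c).[th] = 0 -> c = 0.
Proof.
move=> Hs /root_dvd Hd; apply/eqP; apply: contraT => Hc.
by have := dvdp_leq Hc Hd; rewrite size_fK leqNgt ltnS Hs.
Qed.

Lemma th_n : th ^+ n = io a.
Proof.
move/rootP: Hroot; rewrite rmorphB /= map_polyXn map_polyC /= hornerD hornerN hornerXn hornerC.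
by move/eqP; rewrite subr_eq0 => /eqP.
Qed.

Definition Sr (x : L) := exists p : {poly R}, x = (map_poly io p).[th].

Lemma Sr0 : Sr 0.
Proof. by exists 0; rewrite rmorph0 horner0. Qed.

Lemma SrD x y : Sr x -> Sr y -> Sr (x + y).
Proof. by move=> [p ->] [q ->]; exists (p + q); rewrite rmorphD hornerD. Qed.

Lemma SrN x : Sr x -> Sr (- x).
Proof. by move=> [p ->]; exists (- p); rewrite rmorphN hornerN. Qed.

Lemma SrM x y : Sr x -> Sr y -> Sr (x * y).
Proof. by move=> [p ->] [q ->]; exists (p * q); rewrite rmorphM hornerM. Qed.

Lemma Sr_io r : Sr (io r).
Proof. by exists r%:P; rewrite map_polyC hornerC. Qed.

Lemma Sr_th : Sr th.
Proof. by exists 'X; rewrite map_polyX hornerX. Qed.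

Lemma Sr_red x : Sr x -> exists g : {poly R}, (size g <= n)%N /\ x = (map_poly io g).[th].
Proof.
move=> [p ->]; exists (Pdiv.Ring.rmodp p f); split.
  have := Pdiv.Ring.ltn_rmodpN0 p (monic_neq0 fm).
  by rewrite size_polyDl ?size_polyXn // size_polyN size_polyC ltnS (leq_trans (leq_b1 _)).
rewrite {1}(Pdiv.RingMonic.rdivp_eq fm p) rmorphD rmorphM /= hornerD hornerM.
by move/rootP: Hroot => ->; rewrite mulr0 add0r.
Qed.

Lemma th_int : intB io th.
Proof. by exists f; split => //; exact: fm. Qed.

Lemma Sr_int x : Sr x -> intB io x.
Proof.
move=> [p ->]; apply: intB_horner; last exact: th_int.
by move=> i; rewrite coef_map; apply: intB_phi.
Qed.

Lemma trans_int x : integral_over Sr x -> intB io x.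
Proof.
move=> [q [qm Hq rq]]; apply: (intB_trans qm _ rq) => i; exact: Sr_int.
Qed.

Lemma euler_L z : z \in <<1%VS; th>>%VS -> intB io z -> Sr (io (n%:R * a) * z).
Proof.
move=> Hz [h [hm rh]]; have [c [_ Hc]] := coordP Hz.
have Hdv : exists h0 : {poly R}, h0 \is monic /\ (fK %| (map_poly tf h0 \Po c))%R.
  exists h; split => //; apply: root_dvd.
  by rewrite map_comp_poly horner_comp -Hc -map_ioK; apply/rootP.
have [w [D HwD]] := euler_K Hicd fm Hdv.
have Hw : (map_poly io w).[th] = z * (th ^+ n.-1 *+ n).
  rewrite map_ioK HwD rmorphB !rmorphM /= hornerD hornerN !hornerM -Hc.
  have -> : (map_poly iK fK).[th] = 0 by rewrite -map_ioK; apply/rootP.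
  rewrite mul0r subr0 -deriv_map -map_ioK.
  rewrite rmorphB /= map_polyXn map_polyC /= derivB derivXn derivC subr0 hornerMn hornerXn.
  by [].
have -> : io (n%:R * a) * z = th * (map_poly io w).[th].
  have E1 : io (n%:R * a) = n%:R * io a by rewrite rmorphM rmorph_nat.
  rewrite Hw E1 -th_n.
  have -> : th ^+ n = th * th ^+ n.-1 by rewrite -exprS prednK.
  rewrite -mulr_natr; ring.
by apply: SrM; [exact: Sr_th | exists w].
Qed.

Hypothesis Hnoeth : noetherian R.
Hypothesis Hmax : nonzero_primes_maximal R.
Hypothesis Hsq : square_free a.
Hypothesis Hna : forall P, is_prime_ideal P -> P n%:R -> P a.
Hypothesis Ha0 : a != 0.

Definition InvP (P : R -> Prop) (q : K) := forall p, P p -> exists r, q * tf p = tf r.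

Lemma ideal_sum (I : R -> Prop) (J : eqType) (s : seq J) (F : J -> R) :
  is_ideal I -> (forall i, i \in s -> I (F i)) -> I (\sum_(i <- s) F i).
Proof.
move=> HI; elim: s => [|i s IH] H; first by rewrite big_nil; apply: ideal0.
rewrite big_cons; apply: idealD => //; first by apply: H; rewrite mem_head.
by apply: IH => k Hk; apply: H; rewrite in_cons Hk orbT.
Qed.

Lemma tfa0 : tf a != 0.
Proof. by rewrite tofrac_eq0. Qed.

Lemma invertible (P : R -> Prop) : is_prime_ideal P -> P a ->
  (exists q, InvP P q /\ ~ exists r, q = tf r) ->
  exists s : seq (R * K), (forall u, u \in s -> P u.1 /\ InvP P u.2) /\
    \sum_(u <- s) tf u.1 * u.2 = 1.
Proof.
move=> Pp Pa [q [Hq Hqn]]; have HP := Pp; case: HP => [HPi HP1 HPm].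
pose J r := exists s : seq (R * K), (forall u, u \in s -> P u.1 /\ InvP P u.2) /\
    tf r = \sum_(u <- s) tf u.1 * u.2.
have HJ : is_ideal J.
  split.
  - by exists [::]; split => //; rewrite big_nil tofrac0.
  - move=> x y [s1 [H1 E1]] [s2 [H2 E2]]; exists (s1 ++ s2); split.
      by move=> u; rewrite mem_cat => /orP [/H1|/H2].
    by rewrite big_cat tofracD E1 E2.
  - move=> r x [s [H E]]; exists [seq (r * u.1, u.2) | u <- s]; split.
      move=> u /mapP [v Hv ->] /=; have [Pv Iv] := H v Hv; split => //.
      exact: idealM.
    by rewrite big_map tofracM E mulr_sumr; apply: eq_bigr => u _; rewrite tofracM mulrA.
have PJ : forall x, P x -> J x.
  move=> x Px; exists [:: (x, 1)]; split; last by rewrite big_seq1 mulr1.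
  move=> u; rewrite inE => /eqP -> /=; split => // p Pp'; exists p; by rewrite mul1r.
case: (Hmax Pp (ex_intro _ a (conj Pa Ha0)) HJ PJ) => [[s [Hs E]]|JP].
  by exists s; split => //; rewrite -E tofrac1.
exfalso; apply: Hqn; apply: (chain_int Hicd Hnoeth HPi Pa Ha0) => p Pp'.
have [r Hr] := Hq p Pp'; exists r; split => //; apply: JP.
exists [:: (p, q)]; split; last by rewrite big_seq1 mulrC.
by move=> u; rewrite inE => /eqP -> /=.
Qed.

Lemma uniformizer (P : R -> Prop) : is_prime_ideal P -> P a ->
  (exists s : seq (R * K), (forall u, u \in s -> P u.1 /\ InvP P u.2) /\
    \sum_(u <- s) tf u.1 * u.2 = 1) ->
  exists t, ~ P t /\ forall p, P p -> exists r, t * p = a * r.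
Proof.
move=> Pp Pa [s [Hs Es]]; have HP := Pp; case: HP => [HPi HP1 HPm].
apply: NNPP => Hno.
have Hc : forall t, (forall p, P p -> exists r, t * p = a * r) -> P t.
  by move=> t Ht; apply: NNPP => Pt; apply: Hno; exists t.
apply: (Hsq Pp).
pose J' r := forall p1 p2, P p1 -> P p2 -> exists e, r * (p1 * p2) = a * e.
have HJ' : is_ideal J'.
  split.
  - by move=> p1 p2 _ _; exists 0; rewrite mul0r mulr0.
  - move=> x y Hx Hy p1 p2 P1 P2; have [e1 E1] := Hx p1 p2 P1 P2.
    have [e2 E2] := Hy p1 p2 P1 P2; by exists (e1 + e2); rewrite mulrDl E1 E2 mulrDr.
  - move=> r x Hx p1 p2 P1 P2; have [e E] := Hx p1 p2 P1 P2.
    by exists (r * e); rewrite -mulrA E mulrCA.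
have Hpa : is_ideal (principal_ideal a).
  split.
  - by exists 0; rewrite mulr0.
  - by move=> x y [r1 ->] [r2 ->]; exists (r1 + r2); rewrite mulrDr.
  - by move=> r x [r1 ->]; exists (r * r1); rewrite mulrCA.
exists J'; split => // z; split.
- move=> [r ->].
  pose M y := ideal_mul (ideal_mul P P) J' y.
  have M0 : M 0 by exists [::]; split => //; rewrite big_nil.
  have MD : forall x y, M x -> M y -> M (x + y).
    move=> x y [s1 [H1 E1]] [s2 [H2 E2]]; exists (s1 ++ s2); split.
      by move=> u; rewrite mem_cat => /orP [/H1|/H2].
    by rewrite big_cat E1 E2.
  have E : tf (a * r) = \sum_(u <- s) \sum_(w <- s) (tf u.1 * tf w.1 * u.2 * w.2 * tf a * tf r).
    transitivity ((\sum_(u <- s) tf u.1 * u.2) * ((\sum_(w <- s) tf w.1 * w.2) * (tf a * tf r))).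
      by rewrite Es !mul1r tofracM.
    rewrite mulr_suml; apply: eq_bigr => u _; rewrite mulr_suml mulr_sumr.
    by apply: eq_bigr => w _; ring.
  suff [y [My Ey]] : exists y, M y /\ tf y = tf (a * r).
    by move/tofrac_inj: Ey => <-.
  rewrite E; apply: sum_lift => // u Hu; apply: sum_lift => // w Hw.
  have [Pu1 Iu2] := Hs u Hu; have [Pw1 Iw2] := Hs w Hw.
  have [ew Hew] := Iw2 a Pa.
  have Pew : P ew.
    apply: Hc => p Pp'; have [r' Hr'] := Iw2 p Pp'; exists r'.
    apply: tofrac_inj; rewrite !tofracM -Hew -Hr'; ring.
  have [euw Heuw] := Iu2 ew Pew.
  exists ((u.1 * w.1) * (euw * r)); split.
    exists [:: (u.1 * w.1, euw * r)]; split; last by rewrite big_seq1.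
    move=> v; rewrite inE => /eqP -> /=; split.
      exists [:: (u.1, w.1)]; split; last by rewrite big_seq1.
      by move=> v'; rewrite inE => /eqP -> /=.
    move=> p1 p2 P1 P2; have [r1 Hr1] := Iu2 p1 P1; have [r2 Hr2] := Iw2 p2 P2.
    exists (r * (r1 * r2)); apply: tofrac_inj; rewrite !tofracM -Heuw -Hr1 -Hr2 -Hew.
    ring.
  by rewrite !tofracM -Heuw -Hew; ring.
- move=> [s' [Hs' ->]]; apply: ideal_sum => // u Hu.
  have [[s2 [Hs2 E2]] J'u] := Hs' u Hu; rewrite E2 mulr_suml.
  apply: ideal_sum => // v Hv; have [P1 P2] := Hs2 v Hv.
  by have [e He] := J'u _ _ P1 P2; exists e; rewrite mulrC.
Qed.

Lemma Sr_sum (J : Type) (s : seq J) (F : J -> L) :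
  (forall i, Sr (F i)) -> Sr (\sum_(i <- s) F i).
Proof.
move=> H; elim: s => [|i s IH]; first by rewrite big_nil; exact: Sr0.
by rewrite big_cons; apply: SrD.
Qed.

Lemma Sr_exp x k : Sr x -> Sr (x ^+ k).
Proof.
move=> Hx; elim: k => [|k IH]; first by rewrite expr0 -(rmorph1 io); apply: Sr_io.
by rewrite exprS; apply: SrM.
Qed.

Lemma io_ne0 : io a != 0.
Proof.
apply/eqP => H; move/eqP: tfa0; apply; apply: (fmorph_inj (in_alg L)).
by rewrite rmorph0; exact: H.
Qed.

Lemma coord_eq (c1 c2 : {poly K}) : (size c1 <= n)%N -> (size c2 <= n)%N ->
  (map_poly iK c1).[th] = (map_poly iK c2).[th] -> c1 = c2.
Proof.
move=> s1 s2 E; apply/eqP; rewrite -subr_eq0; apply/eqP; apply: coord_uniq.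
  by apply: leq_trans (size_polyD _ _) _; rewrite size_polyN geq_max s1 s2.
by rewrite rmorphB hornerD hornerN E subrr.
Qed.

Lemma int_div_th u c0 : intB io u -> u * th = c0 -> Sr c0 ->
  exists m s, Sr s /\ c0 ^+ m = th * s.
Proof.
move=> [h [hm rh]] Hu Sc0.
set m := (size h).-1.
have szh : size h = m.+1 by rewrite /m prednK // lt0n size_poly_eq0 monic_neq0.
have hm1 : h`_m = 1 by move/monicP: hm; rewrite /lead_coef szh.
have E0 : 0 = \sum_(i < m.+1) io h`_i * (th ^+ (m - i) * c0 ^+ i).
  move/rootP: rh => rh.
  transitivity (th ^+ m * (map_poly io h).[u]); first by rewrite rh mulr0.
  rewrite (horner_coef_wide (n := m.+1)); last first.
    by rewrite size_map_poly_id0 ?szh // (monicP hm) rmorph1 oner_neq0.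
  rewrite mulr_sumr; apply: eq_bigr => i _; rewrite coef_map.
  rewrite -Hu exprMn mulrCA; congr (_ * _); rewrite mulrCA -exprD subnK; first exact: mulrC.
  by rewrite -ltnS ltn_ord.
exists m, (- \sum_(i < m) io h`_i * (th ^+ (m.-1 - i) * c0 ^+ i)); split.
  apply: SrN; apply: Sr_sum => i; apply: SrM; first exact: Sr_io.
  by apply: SrM; apply: Sr_exp => //; exact: Sr_th.
move: E0; rewrite big_ord_recr /= subnn expr0 mul1r hm1 tofrac1 scale1r mul1r.
move/esym/eqP; rewrite addrC addr_eq0 => /eqP ->.
rewrite mulrN mulr_sumr; congr (- _); apply: eq_bigr => i _.
have Hi : (m - i = (m.-1 - i).+1)%N.
  case: i => i /=; case: (m) => // m' Hi; by rewrite /= subSn // -ltnS.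
by rewrite Hi exprS; ring.
Qed.

Definition Zs z := [/\ z \in <<1%VS; th>>%VS, intB io z & ~ Sr z].
Definition Cz z r := Sr (io r * z).

Lemma Cz_ideal z : is_ideal (Cz z).
Proof.
split; rewrite /Cz.
- by rewrite rmorph0 mul0r; exact: Sr0.
- by move=> x y Hx Hy; rewrite rmorphD mulrDl; apply: SrD.
- by move=> r x Hx; rewrite rmorphM -mulrA; apply: SrM => //; exact: Sr_io.
Qed.

Lemma ioZ (r : R) (y : L) : io r * y = tf r *: y.
Proof. by rewrite /= mulr_algl. Qed.

Lemma hornerZ_io (k : K) (c : {poly K}) :
  (map_poly iK (k *: c)).[th] = iK k * (map_poly iK c).[th].
Proof. by rewrite map_polyZ hornerZ. Qed.

Lemma key x : x \in <<1%VS; th>>%VS -> intB io x -> Sr x.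
Proof.
move=> Hx Hix; apply: NNPP => HSx.
have [z0 [[Hz0 Hiz0 HSz0] Hmz]] :=
  noeth_max (Z := Zs) (C := Cz) Hnoeth (fun z _ => Cz_ideal z) (And3 Hx Hix HSx).
pose P := Cz z0.
have Pid : is_ideal P by exact: Cz_ideal.
have Pprime : is_prime_ideal P.
  split => //.
    by rewrite /P /Cz rmorph1 mul1r.
  move=> x' y' Hxy; case: (classic (P y')) => Py; [by right | left].
  have Zy : Zs (io y' * z0).
    split.
    - by rewrite ioZ; apply: memvZ.
    - by apply: intB_mul => //; apply: intB_phi.
    - exact: Py.
  apply: (Hmz _ Zy).
    move=> r Hr; rewrite /Cz mulrCA; apply: SrM => //; exact: Sr_io.
  by move: Hxy; rewrite /P /Cz rmorphM -mulrA.
have Pa : P a.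
  have H := euler_L Hz0 Hiz0; case: (Pprime) => _ _ Hm.
  by case: (Hm _ _ H) => // /Hna; apply.
have [c [szc Hc]] := coordP Hz0.
have Pco : forall p, P p -> exists g : {poly R}, tf p *: c = map_poly tf g.
  move=> p Pp; have [g [szg Hg]] := Sr_red Pp; exists g.
  apply: coord_eq.
  - exact: leq_trans (size_scale_leq _ _) szc.
  - by rewrite (size_map_inj_poly (@tofrac_inj R) (rmorph0 _)).
  by rewrite hornerZ_io -Hc -map_ioK -Hg.
have [i Hi] : exists i, ~ exists r, c`_i = tf r.
  apply: NNPP => H; apply: HSz0.
  have [cR HcR] : exists cR, c = map_poly tf cR.
    apply: lift_poly => i; apply: NNPP => Hn'; apply: H; by exists i.
  by exists cR; rewrite Hc HcR map_ioK.
have Iq : InvP P c`_i.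
  move=> p Pp; have [g Hg] := Pco p Pp; exists g`_i.
  by rewrite -coef_map -Hg coefZ mulrC.
have Hs := invertible Pprime Pa (ex_intro _ c`_i (conj Iq Hi)).
have [t [Pt Ht]] := uniformizer Pprime Pa Hs.
have [b Hb] := Pco a Pa.
have szb : (size b <= n)%N.
  rewrite -(size_map_inj_poly (@tofrac_inj R) (rmorph0 _)) -Hb.
  exact: leq_trans (size_scale_leq _ _) szc.
suff Pb : forall j, P b`_j.
  apply: Pt.
  have [e He] : exists e, tf t *: c = map_poly tf e.
    apply: lift_poly => j; have [e Ej] := Ht _ (Pb j); exists e.
    apply: (mulfI tfa0); rewrite coefZ mulrCA -coefZ Hb coef_map -!tofracM Ej.
    by [].
  exists e; rewrite /P /Cz.
  by rewrite map_ioK -He hornerZ_io -Hc.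
elim/ltn_ind => j IH.
case: (ltnP j n) => Hjn; last first.
  by rewrite nth_default ?(leq_trans szb) //; apply: ideal0.
have [eR HeR] : exists eR, (tf t / tf a) *: take_poly j (map_poly tf b) = map_poly tf eR.
  apply: lift_poly => k; rewrite coefZ coef_take_poly; case: ifP => Hk; last first.
    by exists 0; rewrite mulr0 tofrac0.
  have [e Ek] := Ht _ (IH k Hk); exists e; rewrite coef_map.
  rewrite mulrAC -tofracM Ek tofracM mulrAC mulfV ?tfa0 ?mul1r //.
set DqR := drop_poly j.+1 b.
set T := take_poly j (map_poly tf b).
have Hdec : map_poly tf b = T + 'X^j * (tf b`_j)%:P + 'X^(j.+1) * map_poly tf DqR.
  apply/polyP => k; rewrite !coefD coef_take_poly !coefXnM coefC !coef_map coef_drop_poly.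
  case: (ltngtP k j) => Hkj.
  - by rewrite ltnS (ltnW Hkj) !addr0.
  - by rewrite subn_eq0 leqNgt Hkj ltnS leqNgt Hkj /= subnK // ?add0r ?addr0.
  - by rewrite Hkj subnn eqxx ltnSn ?add0r ?addr0.
set Tv := (map_poly iK T).[th].
set Dv := (map_poly io DqR).[th].
set Ev := (map_poly iK (map_poly tf eR)).[th].
set k := (n.-1 - j)%N.
have F1 : io a * z0 = Tv + th ^+ j * io b`_j + th ^+ j * th * Dv.
  rewrite Hc -[io a]/(iK (tf a)) -hornerZ_io Hb Hdec !rmorphD !rmorphM /=.
  rewrite !map_polyXn map_polyC /= !hornerD !hornerM !hornerXn hornerC -map_ioK.
  by rewrite [th ^+ j.+1]exprSr.
have F2 : io a * Ev = io t * Tv.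
  rewrite /Ev -HeR hornerZ_io mulrA; congr (_ * _).
  rewrite -[io a]/(iK (tf a)) -rmorphM /= mulrC divfK //; exact: tfa0.
have F3 : th ^+ j * th * th ^+ k = io a.
  rewrite -th_n -(exprSr th j) -exprD; congr (_ ^+ _); rewrite /k; lia.
have F4 : th ^+ n.-1 = th ^+ j * th ^+ k.
  rewrite -exprD; congr (_ ^+ _); rewrite /k; lia.
set u := th ^+ k * (io t * z0 - Ev) - io t * Dv.
have Hu : io a * u = io t * io b`_j * th ^+ n.-1.
  transitivity (th ^+ k * io t * (io a * z0) - th ^+ k * (io a * Ev) - io t * io a * Dv).
    by rewrite /u; ring.
  rewrite F1 F2 F4 -F3; ring.
have Huth : u * th = io t * io b`_j.
  have Hth : th ^+ n.-1 * th = io a by rewrite -(exprSr th n.-1) prednK // th_n.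
  apply: (mulfI io_ne0); rewrite mulrA Hu -Hth; ring.
have Hiu : intB io u.
  rewrite /u; apply: intB_add.
    apply: intB_mul; first by apply: intB_exp; exact: th_int.
    apply: intB_add; first by apply: intB_mul => //; apply: intB_phi.
    by apply: intB_opp; apply: Sr_int; exists eR; rewrite /Ev map_ioK.
  apply: intB_opp; apply: intB_mul; first by apply: intB_phi.
  by apply: Sr_int; exists DqR.
have [m [s0 [Ss0 Hs0]]] := int_div_th Hiu Huth (SrM (Sr_io t) (Sr_io b`_j)).
have [g [szg Hg]] := Sr_red (Sr_exp n Ss0).
have E : io ((t * b`_j) ^+ (m * n)) = io a * (map_poly io g).[th].
  have E1 : io ((t * b`_j) ^+ (m * n)) = ((io t * io b`_j) ^+ m) ^+ n.
    by rewrite rmorphXn rmorphM exprM.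
  by rewrite E1 Hs0 exprMn th_n Hg.
have Hco : (tf ((t * b`_j) ^+ (m * n)))%:P = tf a *: map_poly tf g.
  apply: coord_eq.
  - by apply: leq_trans (size_polyC_leq1 _) Hn.
  - apply: leq_trans (size_scale_leq _ _) _.
    by rewrite (size_map_inj_poly (@tofrac_inj R) (rmorph0 _)).
  rewrite map_polyC hornerC hornerZ_io -map_ioK; exact: E.
have Htb : (t * b`_j) ^+ (m * n) = a * g`_0.
  apply: tofrac_inj; move/(congr1 (fun p : {poly K} => p`_0)): Hco.
  by rewrite coefC coefZ coef_map /= tofracM.
have Ptb : P (t * b`_j).
  by apply: (prime_pow (k := (m * n)%N)) => //; rewrite Htb; apply: idealMr.
case: (Pprime) => _ _ Hm; case: (Hm _ _ Ptb) => // Ptt; exfalso; exact: Pt Ptt.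
Qed.
End Main.

Theorem theorem1p3 (R : idomainType) (L : fieldExtType {fraction R})
  (n : nat) (a : R) (alpha : L) :
  dedekind R ->
  square_free a ->
  irreducible_over ('X^n - a%:P) ->
  root (map_poly (@frac_emb R L) ('X^n - a%:P)) alpha ->
  (forall P, is_prime_ideal P -> P (n%:R) -> P a) ->
  forall x : L, x \in <<1%VS; alpha>>%VS ->
    integral_over (adjoin_ring alpha) x -> adjoin_ring alpha x.
Proof.
move=> [Hnoeth Hicd Hmax] Hsq Hirr Hroot Hna x Hx Hint.
have Ha0 : a != 0.
  apply/eqP => a0; apply: (Hsq (fun z => z = 0)).
    split.
    - split => //; first by move=> x1 y1 -> ->; rewrite addr0.
      by move=> r x1 ->; rewrite mulr0.
    - by move/eqP; rewrite oner_eq0.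
    - by move=> x1 y1 /eqP; rewrite mulf_eq0 => /orP [/eqP|/eqP]; [left|right].
  exists (fun z => z = 0); split.
    split => //; first by move=> x1 y1 -> ->; rewrite addr0.
    by move=> r x1 ->; rewrite mulr0.
  move=> z; split.
    move=> [r ->]; rewrite a0 mul0r; exists [::]; split => //; by rewrite big_nil.
  move=> [s [Hs ->]]; exists 0; rewrite a0 mul0r big1_seq // => u Hu.
  by have [_ ->] := Hs u Hu; rewrite mulr0.
have Hroot' : root (map_poly (in_alg L \o @tofrac R) ('X^n - a%:P)) alpha by [].
have Hn : (0 < n)%N.
  rewrite lt0n; apply/eqP => n0; have [Hf0 _ _] := Hirr.
  move: Hroot' Hf0; rewrite n0 expr0 -polyC1 -polyCB map_polyC /root hornerC => H.
  have : 1 - a = 0.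
    apply: (@tofrac_inj R); apply: (fmorph_inj (in_alg L)).
    by rewrite !rmorph0; apply/eqP.
  by move=> ->; rewrite eqxx.
have Hix := trans_int Hroot' Hn Hint.
exact: (key Hicd Hirr Hroot' Hn Hnoeth Hmax Hsq Hna Ha0 Hx Hix).
Qed.
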